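(* Let $\Lambda$ be a row-finite, cofinal $k$-graph with no sources and $R$ a commutative ring with $1$. Let $a$ be a nonzero element of the center $Z(\mathrm{KP}_R(\Lambda))$, written in normal form $a=\sum_{(\alpha,\beta)\in F}r_{\alpha,\beta}s_\alpha s_{\beta^*}$. Then $\{v\in\Lambda^0: v=r(\beta)\text{ for some }(\alpha,\beta)\in F\}=\Lambda^0$.
   Context: A $k$-graph is a countable category $\Lambda$ with a functor $d:\Lambda\to\mathbb{N}^k$ ($\mathbb{N}^k$ a one-object category under addition) with unique factorization: whenever $d(\lambda)=m+n$ there are unique $\mu,\nu$ with $d(\mu)=m,d(\nu)=n,\lambda=\mu\nu$. $\Lambda^0$ = vertices (degree-$0$ morphisms), $\Lambda^n=d^{-1}(n)$, $r,s$ range and source, $v\Lambda^n=\{\lambda\in\Lambda^n:r(\lambda)=v\}$. Row-finite: $v\Lambda^n$ finite; no sources: $v\Lambda^n\ne\emptyset$. An infinite path is a degree-preserving functor $x$ from $\Omega_k$ (objects $\mathbb{N}^k$, morphisms $(m,n)$ with $m\le n$, $r(m,n)=m$, $s(m,n)=n$, $d(m,n)=n-m$) to $\Lambda$; $x(m):=x(m,m)$. Cofinal: for every infinite path $x$ and vertex $v$ there are $m$ and a path $\lambda$ with $r(\lambda)=v$, $s(\lambda)=x(m)$. Kumjian-Pask $\Lambda$-family in an $R$-algebra $A$: $P:\Lambda^0\to A$, $S:\Lambda^{\ne0}\cup\{\lambda^*:\lambda\in\Lambda^{\neq0}\}\to A$ with (KP1) $P_v$ mutually orthogonal idempotents; (KP2)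 for $r(\mu)=s(\lambda)$: $S_\lambda S_\mu=S_{\lambda\mu}$, $S_{\mu^*}S_{\lambda^*}=S_{(\lambda\mu)^*}$, $P_{r(\lambda)}S_\lambda=S_\lambda=S_\lambda P_{s(\lambda)}$, $P_{s(\lambda)}S_{\lambda^*}=S_{\lambda^*}=S_{\lambda^*}P_{r(\lambda)}$; (KP3) $S_{\lambda^*}S_\mu=\delta_{\lambda,\mu}P_{s(\lambda)}$ when $d(\lambda)=d(\mu)$; (KP4) $P_v=\sum_{\lambda\in v\Lambda^n}S_\lambda S_{\lambda^*}$ for $n\ne0$. $\mathrm{KP}_R(\Lambda)$ is the $R$-algebra generated by a universal such family $(p,s)$; $s_v=s_{v^*}=p_v$ for vertices $v$. Normal form: $a=\sum_{(\alpha,\beta)\in F}r_{\alpha,\beta}s_\alpha s_{\beta^*}$ with $F\subset\Lambda\times\Lambda^m$ finite for some $m\in\mathbb{N}^k$, all $r_{\alpha,\beta}\in R\setminus\{0\}$, and $s(\alpha)=s(\beta)$ for all $(\alpha,\beta)\in F$. *)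

(* Defs.v *)
From HB Require Import structures.
From mathcomp Require Import all_boot all_order all_algebra.
Set Implicit Arguments. Unset Strict Implicit. Unset Printing Implicit Defensive.
Import GRing.Theory.
Local Open Scope ring_scope.

Definition deg_t (k : nat) := {ffun 'I_k -> nat}.
Definition deg0 (k : nat) : deg_t k := [ffun _ => 0%N].
Definition degadd (k : nat) (m n : deg_t k) : deg_t k := [ffun i => (m i + n i)%N].
Definition degsub (k : nat) (n m : deg_t k) : deg_t k := [ffun i => (n i - m i)%N].
Definition degle (k : nat) (m n : deg_t k) : Prop := forall i, (m i <= n i)%N.

(** Vertices (= degree-0 morphisms) are identified with objects. *)
Record kgraph (k : nat) := KGraph {
  Obj : countType;
  Mor : countType;
  src : Mor -> Obj;
  rng : Mor -> Obj;
  idm : Obj -> Mor;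
  comp : Mor -> Mor -> Mor;
  deg : Mor -> deg_t k;
  src_idm : forall v, src (idm v) = v;
  rng_idm : forall v, rng (idm v) = v;
  src_comp : forall l m, src l = rng m -> src (comp l m) = src m;
  rng_comp : forall l m, src l = rng m -> rng (comp l m) = rng l;
  comp_idl : forall l, comp (idm (rng l)) l = l;
  comp_idr : forall l, comp l (idm (src l)) = l;
  compA : forall l m n, src l = rng m -> src m = rng n ->
            comp l (comp m n) = comp (comp l m) n;
  deg_idm : forall v, deg (idm v) = deg0 k;
  deg_comp : forall l m, src l = rng m -> deg (comp l m) = degadd (deg l) (deg m);
  unique_fact : forall l (m n : deg_t k), deg l = degadd m n ->
     exists! p : Mor * Mor, [/\ deg p.1 = m, deg p.2 = n, src p.1 = rng p.2
                                & l = comp p.1 p.2]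
}.

Section KGraphProps.
Variables (k : nat) (G : kgraph k).

Definition row_finite : Prop :=
  forall (v : Obj G) (n : deg_t k), exists s : seq (Mor G),
    forall l, rng l = v -> deg l = n -> l \in s.

Definition no_sources : Prop :=
  forall (v : Obj G) (n : deg_t k), exists l : Mor G, rng l = v /\ deg l = n.

(** Infinite path: degree-preserving functor Omega_k -> G, given by its
    values x m n on the morphisms (m,n), m <= n, of Omega_k. *)
Definition inf_path (x : deg_t k -> deg_t k -> Mor G) : Prop :=
  [/\ forall m, x m m = idm (rng (x m m)),
      forall m n, degle m n -> deg (x m n) = degsub n m
    & forall m n p, degle m n -> degle n p ->
        src (x m n) = rng (x n p) /\ comp (x m n) (x n p) = x m p].

Definition cofinal : Prop :=
  forall x, inf_path x -> forall v : Obj G,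
    exists (m : deg_t k) (l : Mor G), rng l = v /\ src l = rng (x m m).

End KGraphProps.

Record nualg (R : comPzRingType) := NUAlg {
  nua_sort :> lmodType R;
  nua_mul : nua_sort -> nua_sort -> nua_sort;
  nua_mulA : forall x y z, nua_mul x (nua_mul y z) = nua_mul (nua_mul x y) z;
  nua_mulDl : forall x y z, nua_mul (x + y) z = nua_mul x z + nua_mul y z;
  nua_mulDr : forall x y z, nua_mul x (y + z) = nua_mul x y + nua_mul x z;
  nua_mulZl : forall (c : R) x y, nua_mul (c *: x) y = c *: nua_mul x y;
  nua_mulZr : forall (c : R) x y, nua_mul x (c *: y) = c *: nua_mul x y
}.

Section KP.
Variables (k : nat) (G : kgraph k) (R : comPzRingType).

Definition nua_hom (A B : nualg R) (f : A -> B) : Prop :=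
  [/\ forall x y, f (x + y) = f x + f y,
      forall (c : R) x, f (c *: x) = c *: f x
    & forall x y, f (nua_mul x y) = nua_mul (f x) (f y)].

(** Kumjian-Pask family (P, S, St) in B.  [S l] is s_l and [St l] is s_{l^*};
    they are total functions on morphisms, with the convention
    s_v = s_{v^*} = p_v on vertices (degree-0 morphisms = identities). *)
Definition KP_family (B : nualg R) (P : Obj G -> B) (S St : Mor G -> B) : Prop :=
  [/\ (forall v, S (idm v) = P v /\ St (idm v) = P v),
      (forall v, nua_mul (P v) (P v) = P v) /\
      (forall v w, v <> w -> nua_mul (P v) (P w) = 0),
      (forall l m, deg l <> deg0 k -> deg m <> deg0 k -> src l = rng m ->
         nua_mul (S l) (S m) = S (comp l m) /\
         nua_mul (St m) (St l) = St (comp l m)) /\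
      (forall l, deg l <> deg0 k ->
         [/\ nua_mul (P (rng l)) (S l) = S l, nua_mul (S l) (P (src l)) = S l,
             nua_mul (P (src l)) (St l) = St l & nua_mul (St l) (P (rng l)) = St l]),
      (forall l m, deg l <> deg0 k -> deg m <> deg0 k -> deg l = deg m ->
         nua_mul (St l) (S m) = if l == m then P (src l) else 0)
    & (* KP4: sum over the finite set v Lambda^n, enumerated by s *)
      (forall v (n : deg_t k) (s : seq (Mor G)), n <> deg0 k -> uniq s ->
         (forall l, l \in s <-> rng l = v /\ deg l = n) ->
         P v = \sum_(l <- s) nua_mul (S l) (St l))].

Definition is_KP_algebra (A : nualg R) (p : Obj G -> A) (s st : Mor G -> A) : Prop :=
  [/\ KP_family p s st,
      (forall Q : A -> Prop, Q 0 -> (forall x y, Q x -> Q y -> Q (x + y)) ->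
         (forall (c : R) x, Q x -> Q (c *: x)) ->
         (forall x y, Q x -> Q y -> Q (nua_mul x y)) ->
         (forall v, Q (p v)) -> (forall l, Q (s l)) -> (forall l, Q (st l)) ->
         forall x, Q x)
    &
      (forall (B : nualg R) (P : Obj G -> B) (S St : Mor G -> B),
         KP_family P S St ->
         exists f : A -> B, [/\ nua_hom f, (forall v, f (p v) = P v),
                               (forall l, f (s l) = S l) & (forall l, f (st l) = St l)])].

Definition normal_form (A : nualg R) (s st : Mor G -> A) (a : A)
    (m : deg_t k) (F : seq (Mor G * Mor G)) (rc : Mor G * Mor G -> R) : Prop :=
  [/\ uniq F,
      (forall ab, ab \in F -> [/\ deg ab.2 = m, src ab.1 = src ab.2 & rc ab <> 0])
    & a = \sum_(ab <- F) rc ab *: nua_mul (s ab.1) (st ab.2)].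

End KP.

(* Main.v *)
From Stdlib Require Import ClassicalEpsilon Classical.
Require Import Defs.
From HB Require Import structures.
From mathcomp Require Import all_boot all_order all_algebra.
Set Implicit Arguments. Unset Strict Implicit. Unset Printing Implicit Defensive.
Import GRing.Theory.

Notation kcomp := Defs.comp.
Definition cst (k : nat) (j : nat) : deg_t k := [ffun _ => j].

Lemma degadd_sub k (a b : deg_t k) : degle a b -> degadd a (degsub b a) = b.
Proof. by move=> h; apply/ffunP=> i; rewrite !ffunE subnKC. Qed.

Lemma degsub_add k (a b : deg_t k) : degsub (degadd a b) a = b.
Proof. by apply/ffunP=> i; rewrite !ffunE addKn. Qed.

Lemma degle_trans k (a b c : deg_t k) : degle a b -> degle b c -> degle a c.
Proof. by move=> h1 h2 i; apply: leq_trans (h1 i) (h2 i). Qed.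

Lemma deg0_idm k (G : kgraph k) (l : Mor G) : deg l = deg0 k -> l = idm (rng l).
Proof.
move=> h.
have e : deg l = degadd (deg0 k) (deg0 k) by rewrite h; apply/ffunP=> i; rewrite !ffunE.
case: (Defs.unique_fact e) => q [_ U].
have h1 : q = (idm (rng l), l).
  by apply: U; split; rewrite /= ?Defs.deg_idm ?Defs.src_idm ?Defs.comp_idl.
have h2 : q = (l, idm (src l)).
  by apply: U; split; rewrite /= ?Defs.deg_idm ?Defs.rng_idm ?Defs.comp_idr.
by rewrite h1 in h2; case: h2.
Qed.

Definition factP k (G : kgraph k) (l : Mor G) (a : deg_t k) (p : Mor G * Mor G) : Prop :=
  [/\ deg p.1 = a, deg p.2 = degsub (deg l) a, src p.1 = rng p.2 & l = kcomp p.1 p.2].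

Definition fact k (G : kgraph k) (l : Mor G) (a : deg_t k) : Mor G * Mor G :=
  epsilon (inhabits (l, l)) (factP l a).

Lemma fact_spec k (G : kgraph k) (l : Mor G) a : degle a (deg l) ->
  [/\ deg (fact l a).1 = a, deg (fact l a).2 = degsub (deg l) a,
      src (fact l a).1 = rng (fact l a).2 & l = kcomp (fact l a).1 (fact l a).2].
Proof.
move=> h; apply: (epsilon_spec (inhabits (l, l)) (factP l a)).
by case: (Defs.unique_fact (esym (degadd_sub h))) => q [Pq _]; exists q.
Qed.

Lemma fact_uniq k (G : kgraph k) (l mu nu : Mor G) a :
  l = kcomp mu nu -> src mu = rng nu -> deg mu = a -> fact l a = (mu, nu).
Proof.
move=> el hs ha.
have e : deg l = degadd (deg mu) (deg nu) by rewrite el Defs.deg_comp.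
case: (Defs.unique_fact e) => q [_ U].
have h1 : q = (mu, nu) by apply: U; split.
have hle : degle a (deg l) by move=> i; rewrite e -ha ffunE leq_addr.
have h2 : q = fact l a.
  apply: U; have [d1 d2 s12 e12] := fact_spec hle.
  idtac.
  split => //; first by rewrite d1.
  by rewrite d2 e -ha degsub_add.
by rewrite -h2.
Qed.

Lemma fact_comp k (G : kgraph k) (mu nu : Mor G) a :
  src mu = rng nu -> degle a (deg mu) ->
  fact (kcomp mu nu) a = ((fact mu a).1, kcomp (fact mu a).2 nu).
Proof.
move=> hs ha; case: (fact mu a) (fact_spec ha) => q1 q2 [/= d1 d2 s12 e].
subst mu; have s2 : src q2 = rng nu by rewrite -hs Defs.src_comp.
apply: fact_uniq => //=.
- by rewrite Defs.compA.
- by rewrite Defs.rng_comp.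
Qed.

Lemma src_suf k (G : kgraph k) (l : Mor G) a : degle a (deg l) -> src (fact l a).2 = src l.
Proof. by move=> h; case: (fact_spec h) => _ _ s12 e; rewrite {2}e Defs.src_comp. Qed.

Lemma deg_pre k (G : kgraph k) (l : Mor G) a : degle a (deg l) -> deg (fact l a).1 = a.
Proof. by move=> h; case: (fact_spec h). Qed.

Lemma pre_pre k (G : kgraph k) (l : Mor G) a b : degle a b -> degle b (deg l) ->
  (fact (fact l b).1 a).1 = (fact l a).1.
Proof.
move=> hab hb; have hal := degle_trans hab hb.
move: hal; case: (fact l b) (fact_spec hb) => q1 q2 [/= d1 d2 s12 e] hal.
subst l; rewrite fact_comp //. by rewrite d1.
Qed.

Definition seg k (G : kgraph k) (l : Mor G) (a b : deg_t k) := (fact (fact l b).1 a).2.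

Lemma seg_deg k (G : kgraph k) (l : Mor G) a b : degle a b -> degle b (deg l) ->
  deg (seg l a b) = degsub b a.
Proof.
move=> hab hb; have h1 := deg_pre hb.
have hab' : degle a (deg (fact l b).1) by rewrite h1.
by case: (fact_spec hab') => _ -> _ _; rewrite h1.
Qed.

Lemma seg_aux k (G : kgraph k) (mu : Mor G) a b : degle a b -> degle b (deg mu) ->
  src (fact (fact mu b).1 a).2 = rng (fact mu b).2 /\
  kcomp (fact (fact mu b).1 a).2 (fact mu b).2 = (fact mu a).2.
Proof.
move=> hab hb; case: (fact mu b) (fact_spec hb) => q1 q2 [/= d1 d2 s12 e].
subst mu; rewrite fact_comp //=; last by rewrite d1.
by rewrite src_suf // d1.
Qed.

Lemma seg_comp k (G : kgraph k) (l : Mor G) a b c :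
  degle a b -> degle b c -> degle c (deg l) ->
  src (seg l a b) = rng (seg l b c) /\ kcomp (seg l a b) (seg l b c) = seg l a c.
Proof.
move=> hab hbc hc; rewrite /seg -(pre_pre hbc hc).
apply: seg_aux => //; by rewrite deg_pre.
Qed.

Lemma seg_ext k (G : kgraph k) (l nu : Mor G) a b : src l = rng nu -> degle b (deg l) ->
  seg (kcomp l nu) a b = seg l a b.
Proof. by move=> hs hb; rewrite /seg fact_comp. Qed.

Lemma seg_path k (G : kgraph k) (l : Mor G) a : degle a (deg l) ->
  exists2 t : Mor G, rng t = rng (seg l a a) & src t = src l.
Proof.
move=> h; have hs : src (seg l a a) = rng (fact l a).2.
  by rewrite /seg src_suf ?deg_pre //; case: (fact_spec h).
exists (kcomp (seg l a a) (fact l a).2); first by rewrite Defs.rng_comp.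
by rewrite Defs.src_comp // src_suf.
Qed.

Fixpoint Lp k (G : kgraph k) (nxt : Obj G -> Mor G) (w0 : Obj G) (j : nat) : Mor G :=
  if j is j'.+1 then kcomp (Lp nxt w0 j') (nxt (src (Lp nxt w0 j'))) else idm w0.

Lemma Lp_props k (G : kgraph k) (P : Obj G -> Prop) nxt w0 :
  P w0 -> (forall u, P u -> [/\ rng (nxt u) = u, deg (nxt u) = cst k 1 & P (src (nxt u))]) ->
  forall j, P (src (Lp nxt w0 j)) /\ deg (Lp nxt w0 j) = cst k j.
Proof.
move=> hw hn; elim=> [|j [Pj dj]] /=.
  split; first by rewrite Defs.src_idm.
  by rewrite Defs.deg_idm; apply/ffunP=> i; rewrite !ffunE.
have [r1 d1 p1] := hn _ Pj.
rewrite Defs.src_comp ?r1 // Defs.deg_comp ?r1 //; split => //.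
by rewrite dj d1; apply/ffunP=> i; rewrite !ffunE addn1.
Qed.

Lemma Lp_ext k (G : kgraph k) (P : Obj G -> Prop) nxt w0 :
  P w0 -> (forall u, P u -> [/\ rng (nxt u) = u, deg (nxt u) = cst k 1 & P (src (nxt u))]) ->
  forall j d, exists2 t, src (Lp nxt w0 j) = rng t & Lp nxt w0 (j + d) = kcomp (Lp nxt w0 j) t.
Proof.
move=> hw hn j; elim=> [|d [t st et]].
  exists (idm (src (Lp nxt w0 j))); first by rewrite Defs.rng_idm.
  by rewrite addn0 Defs.comp_idr.
have [Pd _] := Lp_props hw hn (j + d).
have [r1 _ _] := hn _ Pd.
have stn : src t = rng (nxt (src (Lp nxt w0 (j + d)))).
  by rewrite r1 et Defs.src_comp.
exists (kcomp t (nxt (src (Lp nxt w0 (j + d))))); first by rewrite Defs.rng_comp.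
by rewrite addnS /= Defs.compA // -et.
Qed.

Definition Nb k (n : deg_t k) := (\sum_(i < k) n i)%N.

Lemma le_Nb k (n : deg_t k) : degle n (cst k (Nb n)).
Proof. by move=> i; rewrite ffunE /Nb (bigD1 i) //= leq_addr. Qed.

Lemma Nb_mono k (n p : deg_t k) : degle n p -> (Nb n <= Nb p)%N.
Proof. by move=> h; apply: leq_sum => i _; apply: h. Qed.

Lemma path_exists k (G : kgraph k) (P : Obj G -> Prop) :
  (forall u, P u -> exists mu, [/\ rng mu = u, deg mu = cst k 1 & P (src mu)]) ->
  forall w0, P w0 ->
  exists x, inf_path x /\ forall m, exists2 t : Mor G, rng t = rng (x m m) & P (src t).
Proof.
move=> step w0 hw.
pose nxt u := epsilon (inhabits (idm u))
   (fun mu => [/\ rng mu = u, deg mu = cst k 1 & P (src mu)]).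
have hn : forall u, P u -> [/\ rng (nxt u) = u, deg (nxt u) = cst k 1 & P (src (nxt u))].
  by move=> u Pu; apply: (epsilon_spec (inhabits (idm u)) (fun mu => [/\ rng mu = u, deg mu = cst k 1 & P (src mu)])); apply: step.
pose L := Lp nxt w0.
have dL : forall n, degle n (deg (L (Nb n))).
  by move=> n; have [_ ->] := Lp_props hw hn (Nb n); apply: le_Nb.
exists (fun m n => seg (L (Nb n)) m n); split; last first.
  move=> m; have [t r1 s1] := seg_path (dL m); exists t => //.
  by rewrite s1; case: (Lp_props hw hn (Nb m)).
split.
- move=> m; apply: deg0_idm; rewrite seg_deg //.
  by apply/ffunP => i; rewrite !ffunE subnn.
- by move=> m n h; rewrite seg_deg.
- move=> m n p hmn hnp.
  have [t st et] := Lp_ext hw hn (Nb n) (Nb p - Nb n).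
  rewrite subnKC ?(Nb_mono hnp) // in et.
  have -> : seg (L (Nb n)) m n = seg (L (Nb p)) m n by rewrite /L et seg_ext.
  by apply: seg_comp => //; apply: dL.
Qed.

Local Open Scope ring_scope.

Lemma mulx0 (R : comPzRingType) (A : nualg R) (x : A) : nua_mul x 0 = 0.
Proof. by have := nua_mulZr 0 x 0; rewrite !scale0r. Qed.

Lemma mul0x (R : comPzRingType) (A : nualg R) (x : A) : nua_mul 0 x = 0.
Proof. by have := nua_mulZl 0 0 x; rewrite !scale0r. Qed.

Lemma nmul_sumr (R : comPzRingType) (A : nualg R) (I : Type) (r : seq I) (F : I -> A) (x : A) :
  nua_mul x (\sum_(i <- r) F i) = \sum_(i <- r) nua_mul x (F i).
Proof.
elim: r => [|h t IH]; first by rewrite !big_nil mulx0.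
by rewrite !big_cons nua_mulDr IH.
Qed.

Lemma nmul_suml (R : comPzRingType) (A : nualg R) (I : Type) (r : seq I) (F : I -> A) (x : A) :
  nua_mul (\sum_(i <- r) F i) x = \sum_(i <- r) nua_mul (F i) x.
Proof.
elim: r => [|h t IH]; first by rewrite !big_nil mul0x.
by rewrite !big_cons nua_mulDl IH.
Qed.

Theorem lemma4p4 (k : nat) (G : kgraph k) (R : comPzRingType)
    (A : nualg R) (p : Obj G -> A) (s st : Mor G -> A) :
  row_finite G -> cofinal G -> no_sources G ->
  is_KP_algebra p s st ->
  forall a : A, a <> 0 ->
  (forall b : A, nua_mul a b = nua_mul b a) ->
  forall (m : deg_t k) (F : seq (Mor G * Mor G)) (rc : Mor G * Mor G -> R),
  normal_form s st a m F rc ->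
  forall v : Obj G, exists2 ab, ab \in F & v = rng ab.2.
Proof.
move=> rf cof _ hKP a a0 ca m F rc hnf v.
move: hKP; rewrite /is_KP_algebra /KP_family => -[[H0 [K1a K1b] [K2a K2b] K3 K4] _ _].
move: hnf; rewrite /normal_form => -[uF hF ea].
pose Hs u := nua_mul a (p u) = 0.
have stp : forall b w, nua_mul (st b) (p w) = if rng b == w then st b else 0.
  move=> b w; case: (deg b =P deg0 k) => [d0|dn].
    rewrite (deg0_idm d0) Defs.rng_idm; have [_ ->] := H0 (rng b).
    by case: (rng b =P w) => [<-|ne]; [rewrite K1a | rewrite K1b].
  have [_ _ _ h4] := K2b b dn.
  rewrite -{1}h4 -nua_mulA; case: (rng b =P w) => [<-|ne]; first by rewrite K1a.
  by rewrite K1b // mulx0.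
have termp : forall (ab : Mor G * Mor G) w,
    nua_mul (nua_mul (s ab.1) (st ab.2)) (p w) =
    if rng ab.2 == w then nua_mul (s ab.1) (st ab.2) else 0.
  by move=> ab w; rewrite -nua_mulA stp; case: ifP => // _; rewrite mulx0.
have ap : forall w, nua_mul a (p w) =
    \sum_(ab <- F) rc ab *: (if rng ab.2 == w then nua_mul (s ab.1) (st ab.2) else 0).
  by move=> w; rewrite ea nmul_suml; apply: eq_bigr => ab _; rewrite nua_mulZl termp.
apply: NNPP => hno.
have Hv : Hs v.
  rewrite /Hs ap; apply: big1_seq => ab /= hab.
  case: eqP => [e|_]; last by rewrite scaler0.
  by exfalso; apply: hno; exists ab => //.
have her : forall l, Hs (rng l) -> Hs (src l).
  move=> l h; case: (deg l =P deg0 k) => [d0|dn].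
    by rewrite (deg0_idm d0) Defs.src_idm.
  rewrite /Hs; have := K3 l l dn dn erefl; rewrite eqxx => <-.
  rewrite nua_mulA (ca (st l)); have [_ _ _ h4] := K2b l dn.
  rewrite -h4 -(nua_mulA (st l) (p (rng l)) a) -(ca (p (rng l))).
  by rewrite (h : nua_mul a (p (rng l)) = 0) mulx0 mul0x.
have step : forall u, ~ Hs u -> exists mu, [/\ rng mu = u, deg mu = cst k 1 & ~ Hs (src mu)].
  move=> u hu; have [k0|kpos] := posnP k.
    exists (idm u); rewrite Defs.rng_idm Defs.src_idm Defs.deg_idm; split=> //.
    by apply/ffunP => -[i hi]; exfalso; rewrite k0 in hi.
  have one_nz : cst k 1 <> deg0 k by move/ffunP/(_ (Ordinal kpos)); rewrite !ffunE.
  apply: NNPP => hno2.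
  have allH : forall mu, rng mu = u -> deg mu = cst k 1 -> Hs (src mu).
    by move=> mu r1 d1; apply: NNPP => hm; apply: hno2; exists mu; split.
  apply: hu; have [s0 hs0] := rf u (cst k 1).
  pose s' := undup [seq l <- s0 | (rng l == u) && (deg l == cst k 1)].
  have hmem : forall l, l \in s' <-> rng l = u /\ deg l = cst k 1.
    move=> l; rewrite mem_undup mem_filter; split.
      by case/andP => /andP [/eqP -> /eqP ->].
    by case=> r1 d1; rewrite r1 d1 !eqxx /=; apply: hs0.
  rewrite /Hs (K4 u (cst k 1) s' one_nz (undup_uniq _) hmem) nmul_sumr.
  apply: big1_seq => l /= /hmem [r1 d1].
  rewrite nua_mulA (ca (s l)).
  have dn : deg l <> deg0 k by rewrite d1.
  have [_ h2 _ _] := K2b l dn.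
  rewrite -h2 -(nua_mulA (s l)) -(ca (p (src l))).
  by rewrite (allH l r1 d1 : nua_mul a (p (src l)) = 0) mulx0 mul0x.
have allH : forall w, Hs w.
  move=> w; apply: NNPP => hw.
  have [x [ix hx]] := path_exists step hw.
  have [m0 [l [rl sl]]] := cof x ix v.
  have [t rt st'] := hx m0.
  apply: st'; have e : src l = rng t by rewrite sl rt.
  have := her (kcomp l t); rewrite Defs.src_comp // Defs.rng_comp // rl; by apply.
pose W := undup [seq rng ab.2 | ab <- F].
pose e := \sum_(w <- W) p w.
have t1 : forall ab, ab \in F -> nua_mul (nua_mul (s ab.1) (st ab.2)) e = nua_mul (s ab.1) (st ab.2).
  move=> ab hab; rewrite nmul_sumr (bigD1_seq (rng ab.2)) /=; last exact: undup_uniq.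
    rewrite termp eqxx big1 ?addr0 // => w /negbTE; rewrite termp eq_sym => ->; by [].
  by rewrite mem_undup; apply/mapP; exists ab.
have e2 : nua_mul a e = a.
  rewrite ea nmul_suml; apply: eq_big_seq => ab hab; by rewrite nua_mulZl t1.
have e3 : nua_mul a e = 0 by rewrite nmul_sumr big1_seq // => w _; apply: allH.
by apply: a0; rewrite -e2 e3.
Qed.
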